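(* Let $p\in[1,\infty]$ and let $(X,d,\mu)$ be an infinitesimally doubling metric measure space which is $p$-thick geodesic. Then $d=d_p$.
   Context: A metric measure space is a proper metric space with a Borel regular outer measure positive and finite on balls; infinitesimally doubling means $\limsup_{r\to0}\mu(B(x,2r))/\mu(B(x,r))<\infty$ for $\mu$-a.e. $x$. $\operatorname{Mod}_p\Gamma=\inf\int\rho^pd\mu$ (for $p<\infty$), $\operatorname{Mod}_\infty\Gamma=\inf\|\rho\|_{L^\infty}$, over Borel $\rho\ge0$ with $\int_\gamma\rho\ge1$ on $\Gamma$. $\Gamma(E,F;C)$ is the family of curves $\gamma:[0,1]\to X$ with $\gamma(0)\in E,\gamma(1)\in F,\ell(\gamma)\le Cd(\gamma(0),\gamma(1))$; $X$ is $p$-thick geodesic if $\operatorname{Mod}_p\Gamma(E,F;C)>0$ for all $C>1$ and all measurable $E,F$ of positive measure. With $\Gamma(E,F)$ the Lipschitz curves $[0,1]\to X$ from $E$ to $F$, $ess\ell_p(\Gamma):=\sup_{\operatorname{Mod}_p\Gamma_0=0}\inf\{\ell(\gamma):\gamma\in\Gamma\setminus\Gamma_0\}$ ($\inf\emptyset=\infty$), $d_p'(x,y):=\lim_{\delta\to0}ess\ell_p\Gamma(\bar B(x,\delta),\bar B(y,\delta))$, and $d_p(x,y):=\inf\{\sum_{i=1}^nd_p'(x_{i-1},x_i):x_0=x,x_n=y\}$. *)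

(* Defs.v *)
From HB Require Import structures.
From mathcomp Require Import all_boot all_order all_algebra.
From mathcomp Require Import all_classical all_reals all_analysis measurable_realfun ess_sup_inf.
Set Implicit Arguments. Unset Strict Implicit. Unset Printing Implicit Defensive.
Import Order.TTheory GRing.Theory Num.Def Num.Theory.
Import numFieldNormedType.Exports.
Local Open Scope classical_set_scope.
Local Open Scope ring_scope.

Section MetricMeasure.
Context {R : realType} {disp : measure_display} {X : measurableType disp}.
Variable d : X -> X -> R.

Definition is_metric : Prop :=
  [/\ forall x y, d x y = 0 <-> x = y,
      forall x y, d x y = d y x &
      forall x y z, d x z <= d x y + d y z].

Definition oball (x : X) (r : R) : set X := [set y | d x y < r].
Definition cball (x : X) (r : R) : set X := [set y | d x y <= r].

Definition dopen (U : set X) : Prop :=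
  forall x, U x -> exists2 r : R, 0 < r & oball x r `<=` U.

Definition dcompact (K : set X) : Prop :=
  forall (I : Type) (U : I -> set X), (forall i, dopen (U i)) ->
    K `<=` \bigcup_(i in setT) U i ->
    exists2 J : set I, finite_set J & K `<=` \bigcup_(i in J) U i.

Definition proper_space : Prop := forall x r, dcompact (cball x r).

Definition borel_structure : Prop :=
  @measurable _ X = <<s dopen >>.

Definition balls_pos_finite (mu : {measure set X -> \bar R}) : Prop :=
  forall x r, 0 < r -> (0 < mu (oball x r) < +oo)%E.

Definition inf_doubling (mu : {measure set X -> \bar R}) : Prop :=
  {ae mu, forall x,
    (limf_esup (fun r : R => (fine (mu (oball x (2 * r))) /
                              fine (mu (oball x r)))%:E) (0%R)^'+ < +oo)%E}.

(* a curve is gamma : R -> X, only its restriction to [0,1] matters *)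

Definition curve_cont (g : R -> X) : Prop :=
  forall t, 0 <= t <= 1 -> forall e, 0 < e -> exists2 del, 0 < del &
    forall s, 0 <= s <= 1 -> `|s - t| < del -> d (g s) (g t) < e.

Definition curve_lip (g : R -> X) : Prop :=
  exists L : R, forall s t, 0 <= s <= 1 -> 0 <= t <= 1 ->
    d (g s) (g t) <= L * `|s - t|.

Definition lengthOn (g : R -> X) (a b : R) : \bar R :=
  ereal_sup [set l | exists (n : nat) (t : nat -> R),
       [/\ t 0%N = a, t n = b, (forall i, (i < n)%N -> t i <= t i.+1) &
            l = (\sum_(i < n) d (g (t i)) (g (t i.+1)))%:E]].

Definition clength (g : R -> X) : \bar R := lengthOn g 0 1.

Definition arclen (g : R -> X) (s : R) : X :=
  g (inf [set t : R | 0 <= t <= 1 /\ (s%:E <= lengthOn g 0 t)%E]).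

Definition line_int (rho : X -> \bar R) (g : R -> X) : \bar R :=
  if clength g is l%:E then
    \int[lebesgue_measure]_(s in `[0%R, l]%classic) rho (arclen g s)
  else +oo%E.

Definition admissible (G : set (R -> X)) (rho : X -> \bar R) : Prop :=
  [/\ measurable_fun [set: X] rho, forall x, (0 <= rho x)%E &
      forall g, G g -> (1 <= line_int rho g)%E].

Definition Mod (mu : {measure set X -> \bar R}) (p : \bar R)
  (G : set (R -> X)) : \bar R :=
  match p with
  | q%:E => ereal_inf [set (\int[mu]_x (poweR (rho x) q))%E | rho in admissible G]
  | _ => ereal_inf [set ess_sup mu rho | rho in admissible G]
  end.

Definition GammaC (E F : set X) (C : R) : set (R -> X) :=
  [set g | curve_cont g /\ E (g 0) /\ F (g 1) /\
           (clength g <= (C * d (g 0) (g 1))%:E)%E].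

Definition GammaLip (E F : set X) : set (R -> X) :=
  [set g | curve_lip g /\ E (g 0) /\ F (g 1)].

Definition thick_geodesic (mu : {measure set X -> \bar R}) (p : \bar R) : Prop :=
  forall C : R, 1 < C -> forall E F : set X, measurable E -> measurable F ->
    (0 < mu E)%E -> (0 < mu F)%E -> (0 < Mod mu p (GammaC E F C))%E.

Definition ess_len (mu : {measure set X -> \bar R}) (p : \bar R)
  (G : set (R -> X)) : \bar R :=
  ereal_sup [set ereal_inf [set clength g | g in G `\` G0] |
             G0 in [set G0 | Mod mu p G0 = 0%E]].

Definition dp' (mu : {measure set X -> \bar R}) (p : \bar R) (x y : X) : \bar R :=
  lim ((fun del : R => ess_len mu p (GammaLip (cball x del) (cball y del)))
         @ (0%R)^'+).

Definition dp (mu : {measure set X -> \bar R}) (p : \bar R) (x y : X) : \bar R :=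
  ereal_inf [set l | exists (n : nat) (xs : nat -> X),
     [/\ (0 < n)%N, xs 0%N = x, xs n = y &
          l = (\sum_(i < n) dp' mu p (xs i) (xs i.+1))%E]].

End MetricMeasure.

(* Main.v *)
Require Import Defs.
From HB Require Import structures.
From mathcomp Require Import all_boot all_order all_algebra.
From mathcomp Require Import all_classical all_reals all_analysis measurable_realfun ess_sup_inf.
From mathcomp Require Import zify lra.
Set Implicit Arguments. Unset Strict Implicit. Unset Printing Implicit Defensive.
Import Order.TTheory GRing.Theory Num.Def Num.Theory.
Import numFieldNormedType.Exports.
Local Open Scope classical_set_scope.
Local Open Scope ring_scope.

Section Len.
Context {R : realType} {disp : measure_display} {X : measurableType disp}.
Variable d : X -> X -> R.
Hypothesis dm : is_metric d.

Lemma d0 x : d x x = 0.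
Proof. by case: dm => H _ _; apply H. Qed.
Lemma dsym x y : d x y = d y x.
Proof. by case: dm. Qed.
Lemma dtri x y z : d x z <= d x y + d y z.
Proof. by case: dm. Qed.
Lemma dge0 x y : 0 <= d x y.
Proof. have := dtri x y x; rewrite d0 (dsym y x); lra. Qed.
Lemma deq0 x y : d x y = 0 -> x = y.
Proof. by case: dm => H _ _; apply H. Qed.

Definition psum (g : R -> X) n (t : nat -> R) :=
  \sum_(i < n) d (g (t i)) (g (t i.+1)).
Definition ispart (a b : R) n (t : nat -> R) :=
  [/\ t 0%N = a, t n = b & forall i, (i < n)%N -> t i <= t i.+1].

Lemma psumS g n t : psum g n.+1 t = d (g (t 0%N)) (g (t 1%N)) + psum g n (fun i => t i.+1).
Proof. by rewrite /psum big_ord_recl. Qed.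

Lemma psum0 g t : psum g 0 t = 0.
Proof. by rewrite /psum big_ord0. Qed.

Lemma psum_ge0 g n t : 0 <= psum g n t.
Proof. by apply: sumr_ge0 => i _; apply: dge0. Qed.

Lemma ispartS a b n t : ispart a b n.+1 t -> ispart (t 1%N) b n (fun i => t i.+1).
Proof. by case=> h0 hn hm; split => // i hi; apply: hm. Qed.

Lemma ispart_mono a b n t : ispart a b n t ->
  forall i j, (i <= j <= n)%N -> t i <= t j.
Proof.
case=> _ _ hm i j /andP[hij hjn].
have: forall k, (i + k <= n)%N -> t i <= t (i + k)%N.
  elim=> [|k IH] hk; first by rewrite addn0.
  apply: le_trans (IH _) _; first lia.
  by rewrite addnS; apply: hm; lia.
by move=> /(_ (j - i)%N); rewrite subnKC //; apply; lia.
Qed.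

Lemma ispart_rng a b n t : ispart a b n t -> forall i, (i <= n)%N -> a <= t i <= b.
Proof.
move=> hp i hi; have [h0 hn _] := hp.
by rewrite -h0 -hn !(ispart_mono hp) //; apply/andP; split.
Qed.

Lemma ispart_le a b n t : ispart a b n t -> a <= b.
Proof. by move=> hp; have := ispart_rng hp (leqnn n); case: hp => _ -> _ /andP[]. Qed.

Definition tp (a b : R) := fun i : nat => if i == 0%N then a else b.
Lemma ispart_tp a b : a <= b -> ispart a b 1 (tp a b).
Proof. by move=> ab; split => // -[]. Qed.
Lemma psum_tp g a b : psum g 1 (tp a b) = d (g a) (g b).
Proof. by rewrite psumS psum0 addr0. Qed.

Definition cat_part n (t u : nat -> R) := fun i => if (i <= n)%N then t i else u (i - n)%N.

Lemma ispart_cat a b c n m t u : ispart a b n t -> ispart b c m u ->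
  ispart a c (n + m) (cat_part n t u) /\
  forall g, psum g (n + m) (cat_part n t u) = psum g n t + psum g m u.
Proof.
move=> [t0 tn tm] [u0 um umm]; split; first split.
- by rewrite /cat_part leq0n.
- rewrite /cat_part; case: ifP => H.
    have m0 : m = 0%N by lia.
    by rewrite m0 addn0 tn -u0 -um m0.
  by rewrite addKn.
- move=> i hi; rewrite /cat_part.
  case: (ltnP i n) => hin.
    by rewrite (ltnW hin); apply: tm.
  case: (eqVneq i n) => [->|hne].
    by rewrite leqnn subSn // subnn tn -u0; apply: umm; lia.
  have -> : (i <= n)%N = false by lia.
  by rewrite subSn //; apply: umm; lia.
move=> g; rewrite /psum big_split_ord /=; congr (_ + _).
  apply: eq_bigr => i _; rewrite /cat_part /=.
  by rewrite ltnW // ltn_ord.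
apply: eq_bigr => i _; rewrite /cat_part /=.
have -> : (n + i < n)%N = false by lia.
rewrite -addnS !addKn; congr (d _ _).
case: ifP => H //.
have i0 : (i : nat) = 0%N by move: H; clear; lia.
by rewrite i0 addn0 tn u0.
Qed.

Lemma len_ub g a b n t : ispart a b n t -> ((psum g n t)%:E <= lengthOn d g a b)%E.
Proof. by case=> h0 hn hm; apply: ereal_sup_ubound; exists n, t; split. Qed.

Lemma len_le g a b M : (forall n t, ispart a b n t -> ((psum g n t)%:E <= M)%E) ->
  (lengthOn d g a b <= M)%E.
Proof. by move=> H; apply: ge_ereal_sup => l [n [t [h0 hn hm ->]]]; apply: H. Qed.

Lemma len_d g a b : a <= b -> ((d (g a) (g b))%:E <= lengthOn d g a b)%E.
Proof. by move=> ab; rewrite -psum_tp; apply: len_ub; apply: ispart_tp. Qed.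

End Len.

Section Fin.
Context {R : realType} {disp : measure_display} {X : measurableType disp}.
Variable d : X -> X -> R.
Hypothesis dm : is_metric d.
Variables (g : R -> X) (L : R).
Hypothesis HL : clength d g = L%:E.

Lemma part_le_L a b n t : 0 <= a -> b <= 1 -> ispart a b n t -> psum d g n t <= L.
Proof.
move=> a0 b1 hp; have ab := ispart_le hp.
have [h1 s1] := ispart_cat d (ispart_tp a0) hp.
have [h2 s2] := ispart_cat d h1 (ispart_tp b1).
have := len_ub d g h2; rewrite -/(clength d g) HL lee_fin s2 s1 !psum_tp.
have := dge0 dm (g 0) (g a); have := dge0 dm (g b) (g 1); lra.
Qed.

Definition lr a b := fine (lengthOn d g a b).

Lemma len_fin a b : 0 <= a -> a <= b -> b <= 1 -> lengthOn d g a b = (lr a b)%:E.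
Proof.
move=> a0 ab b1.
have h1 := len_d d g ab.
have h2 : (lengthOn d g a b <= L%:E)%E.
  by apply: len_le => n t hp; rewrite lee_fin; apply: part_le_L hp.
by rewrite /lr; move: h1 h2; case: (lengthOn d g a b).
Qed.

Lemma lr_ub a b n t : 0 <= a -> b <= 1 -> ispart a b n t -> psum d g n t <= lr a b.
Proof.
move=> a0 b1 hp; have ab := ispart_le hp.
by rewrite -lee_fin -len_fin //; apply: len_ub.
Qed.

Lemma lr_le a b M : 0 <= a -> a <= b -> b <= 1 ->
  (forall n t, ispart a b n t -> psum d g n t <= M) -> lr a b <= M.
Proof.
move=> a0 ab b1 H; rewrite -lee_fin -len_fin //.
by apply: len_le => n t hp; rewrite lee_fin; apply: H.
Qed.

Lemma lr_approx a b e : 0 <= a -> a <= b -> b <= 1 -> 0 < e ->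
  exists n t, ispart a b n t /\ lr a b - e < psum d g n t.
Proof.
move=> a0 ab b1 e0.
have : ((lr a b - e)%:E < lengthOn d g a b)%E by rewrite len_fin // lte_fin; lra.
case/ereal_sup_gt => _ [n [t [h0 hn hm ->]]]; rewrite lte_fin => H.
by exists n, t; split.
Qed.

Lemma lr_d a b : 0 <= a -> a <= b -> b <= 1 -> d (g a) (g b) <= lr a b.
Proof. by move=> a0 ab b1; rewrite -psum_tp; apply: lr_ub => //; apply: ispart_tp. Qed.

Lemma lr_ge0 a b : 0 <= a -> a <= b -> b <= 1 -> 0 <= lr a b.
Proof. by move=> a0 ab b1; apply: le_trans (lr_d a0 ab b1); apply: dge0. Qed.

Lemma lr_super a b c : 0 <= a -> a <= b -> b <= c -> c <= 1 -> lr a b + lr b c <= lr a c.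
Proof.
move=> a0 ab bc c1; apply/ler_addgt0Pr => e e0.
have e2 : 0 < e / 2 by lra.
have [n [t [h1 H1]]] := lr_approx a0 ab (le_trans bc c1) e2.
have [m [u [h2 H2]]] := lr_approx (le_trans a0 ab) bc c1 e2.
have [hp hs] := ispart_cat d h1 h2.
have := lr_ub a0 c1 hp; rewrite hs; lra.
Qed.

Lemma lr_aa a : 0 <= a -> a <= 1 -> lr a a = 0.
Proof.
move=> a0 a1; have := lr_super a0 (lexx a) (lexx a) a1.
have := lr_ge0 a0 (lexx a) a1; lra.
Qed.

Lemma split_le c b : forall n a t, ispart a c n t -> a <= b -> b <= c -> 0 <= a -> c <= 1 ->
  psum d g n t <= lr a b + lr b c.
Proof.
elim=> [|n IH] a t hp ab bc a0 c1.
  case: hp => h0 hn _; rewrite psum0.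
  have ac : a = c by rewrite -h0 -hn.
  have := lr_ge0 a0 ab (le_trans bc c1).
  have := lr_ge0 (le_trans a0 ab) bc c1; lra.
have hp' := ispartS hp.
have [h0 hn hm] := hp.
have /andP[at1 t1c] := ispart_rng hp (isT : (1 <= n.+1)%N).
rewrite psumS h0.
case: (leP b (t 1%N)) => hb.
  pose u := fun i : nat => if i == 0%N then b else t i.
  have hu : ispart b c n.+1 u.
    split => //; case => [|i] hi. 
      by rewrite /u /=.
    by rewrite /u /=; apply: hm.
  have := lr_ub (le_trans a0 ab) c1 hu; rewrite psumS /=.
  have := dtri dm (g a) (g b) (g (t 1%N)).
  have := lr_d a0 ab (le_trans bc c1); lra.
have := IH _ _ hp' (ltW hb) bc (le_trans a0 at1) c1.
have := lr_d a0 at1 (le_trans t1c c1).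
have := lr_super a0 at1 (ltW hb) (le_trans bc c1); lra.
Qed.

Lemma lr_sub a b c : 0 <= a -> a <= b -> b <= c -> c <= 1 -> lr a c <= lr a b + lr b c.
Proof.
move=> a0 ab bc c1; apply: lr_le => //; first exact: le_trans bc.
by move=> n t hp; apply: split_le hp ab bc a0 c1.
Qed.

Lemma lr_add a b c : 0 <= a -> a <= b -> b <= c -> c <= 1 -> lr a c = lr a b + lr b c.
Proof.
move=> a0 ab bc c1; apply/eqP; rewrite eq_le lr_sub // lr_super //.
Qed.

Lemma first_pt a c : forall n t, ispart a c n t -> a < c -> 0 <= a -> c <= 1 ->
  exists2 v, a < v <= c & psum d g n t <= d (g a) (g v) + lr v c.
Proof.
elim=> [|n IH] t hp ac a0 c1.
  by case: hp => h0 hn _; move: ac; rewrite -h0 -hn ltxx.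
have hp' := ispartS hp.
have [h0 hn hm] := hp.
have /andP[at1 t1c] := ispart_rng hp (isT : (1 <= n.+1)%N).
rewrite psumS h0.
case: (ltP a (t 1%N)) => ha.
  exists (t 1%N); first by rewrite ha t1c.
  have := lr_ub (ltW (le_lt_trans a0 ha)) c1 hp'; lra.
have e : t 1%N = a by apply/le_anti; rewrite ha at1.
rewrite e (d0 dm) add0r; apply: IH => //.
by rewrite -e.
Qed.

Lemma last_pt c : forall n a t, ispart a c n t -> a < c -> 0 <= a -> c <= 1 ->
  exists2 v, a <= v < c & psum d g n t <= lr a v + d (g v) (g c).
Proof.
elim=> [|n IH] a t hp ac a0 c1.
  by case: hp => h0 hn _; move: ac; rewrite -h0 -hn ltxx.
have hp' := ispartS hp.
have [h0 hn hm] := hp.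
have /andP[at1 t1c] := ispart_rng hp (isT : (1 <= n.+1)%N).
rewrite psumS h0.
case: (ltP (t 1%N) c) => hc.
  have [v /andP[v1 vc] Hv] := IH _ _ hp' hc (le_trans a0 at1) c1.
  exists v; first by rewrite (le_trans at1 v1) vc.
  have := lr_d a0 at1 (le_trans t1c c1).
  have := lr_super a0 at1 v1 (le_trans (ltW vc) c1); lra.
have e : t 1%N = c by apply/le_anti; rewrite hc t1c.
exists a; first by rewrite lexx ac.
have c0 : 0 <= c by apply: le_trans a0 (ltW ac).
move: hp'; rewrite e => hp'.
have := lr_ub c0 c1 hp'; rewrite lr_aa // lr_aa //; last exact: le_trans (ltW ac) c1.
have := lr_ge0 a0 (ltW ac) c1; lra.
Qed.

End Fin.

Section Cont.
Context {R : realType} {disp : measure_display} {X : measurableType disp}.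
Variable d : X -> X -> R.
Hypothesis dm : is_metric d.
Variables (g : R -> X) (L : R).
Hypothesis HL : clength d g = L%:E.
Hypothesis gc : curve_cont d g.

Local Notation lr := (lr d g).

Lemma right_cont t0 e : 0 <= t0 -> t0 < 1 -> 0 < e ->
  exists2 t1, t0 < t1 <= 1 & lr t0 t1 < e.
Proof.
move=> t00 t01 e0; have e2 : 0 < e / 2 by lra.
have [n [t [hp H]]] := lr_approx dm HL t00 (ltW t01) (lexx 1) e2.
have [v /andP[tv v1] Hv] := first_pt dm HL hp t01 t00 (lexx 1).
have [del del0 Hdel] := gc (t := t0) (ltac:(rewrite t00 ltW //)) e2.
pose t1 := Num.min v (t0 + del / 2).
have h1 : t1 <= v by rewrite /t1 ge_min lexx.
have h2 : t1 <= t0 + del / 2 by rewrite /t1 ge_min lexx orbT.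
have h3 : t0 < t1 by rewrite /t1 lt_min tv /=; lra.
exists t1; first by rewrite h3 (le_trans h1 v1).
have hd : d (g t1) (g t0) < e / 2.
  apply: Hdel; first by apply/andP; split; lra.
  rewrite ger0_norm; lra.
have := lr_super dm HL (ltW (le_lt_trans t00 h3)) h1 v1 (lexx 1).
have := lr_d dm HL (ltW (le_lt_trans t00 h3)) h1 v1.
have := dtri dm (g t0) (g t1) (g v).
have := lr_add dm HL t00 (ltW h3) (le_trans h1 v1) (lexx 1).
rewrite (dsym dm (g t1) (g t0)) in hd; lra.
Qed.

Lemma left_cont t0 e : 0 < t0 -> t0 <= 1 -> 0 < e ->
  exists2 t1, 0 <= t1 < t0 & lr t1 t0 < e.
Proof.
move=> t00 t01 e0; have e2 : 0 < e / 2 by lra.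
have [n [t [hp H]]] := lr_approx dm HL (lexx 0) (ltW t00) t01 e2.
have [v /andP[v0 vt] Hv] := last_pt dm HL hp t00 (lexx 0) t01.
have [del del0 Hdel] := gc (t := t0) (ltac:(rewrite t01 (ltW t00) //)) e2.
pose t1 := Num.max v (t0 - del / 2).
have h1 : v <= t1 by rewrite /t1 le_max lexx.
have h2 : t0 - del / 2 <= t1 by rewrite /t1 le_max lexx orbT.
have h3 : t1 < t0 by rewrite /t1 gt_max vt /=; lra.
exists t1; first by rewrite h3 (le_trans v0 h1).
have hd : d (g t1) (g t0) < e / 2.
  apply: Hdel; first by apply/andP; split; lra.
  rewrite ler0_norm; lra.
have := lr_super dm HL (lexx 0) v0 h1 (le_trans (ltW h3) t01).
have := lr_d dm HL v0 h1 (le_trans (ltW h3) t01).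
have := dtri dm (g v) (g t1) (g t0).
have := lr_add dm HL (lexx 0) (le_trans v0 h1) (ltW h3) t01.
lra.
Qed.

Definition Sset (s : R) := [set t : R | 0 <= t <= 1 /\ (s%:E <= lengthOn d g 0 t)%E].
Definition tau s := inf (Sset s).
Definition ell t := lr 0 t.

Lemma ell1 : ell 1 = L.
Proof. by change (fine (clength d g) = L); rewrite HL. Qed.

Lemma ell0 : ell 0 = 0.
Proof. by rewrite /ell (lr_aa dm HL). Qed.

Lemma L_ge0 : 0 <= L.
Proof. by rewrite -ell1; apply: (lr_ge0 dm HL). Qed.

Lemma ell_mono a b : 0 <= a -> a <= b -> b <= 1 -> ell a <= ell b.
Proof.
move=> a0 ab b1; rewrite /ell.
have := lr_super dm HL (lexx 0) a0 ab b1; have := lr_ge0 dm HL a0 ab b1; lra.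
Qed.

Lemma ell_rng t : 0 <= t -> t <= 1 -> 0 <= ell t <= L.
Proof.
move=> t0 t1; rewrite -ell1 ell_mono // andbT.
by rewrite -ell0 ell_mono.
Qed.

Lemma S_iff s t : 0 <= t -> t <= 1 -> Sset s t <-> s <= ell t.
Proof.
move=> t0 t1; rewrite /Sset /= /ell (len_fin dm HL) // lee_fin t0 t1; split; first by case.
by [].
Qed.

Lemma S_ne s : s <= L -> Sset s !=set0.
Proof. by move=> sL; exists 1; apply/S_iff => //; rewrite ell1. Qed.

Lemma S_lb s : has_lbound (Sset s).
Proof. by exists 0 => t [/andP[]]. Qed.

Lemma tau_rng s : s <= L -> 0 <= tau s <= 1.
Proof.
move=> sL; apply/andP; split.
  by apply: lb_le_inf; [exact: S_ne| move=> t [/andP[]]].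
by apply: ge_inf; [exact: S_lb| apply/S_iff => //; rewrite ell1].
Qed.

Lemma tau_ell_le s t : 0 <= t -> t <= 1 -> s <= ell t -> tau s <= t.
Proof. by move=> t0 t1 st; apply: ge_inf; [exact: S_lb| apply/S_iff]. Qed.

Lemma ell_tau s : 0 <= s -> s <= L -> ell (tau s) = s.
Proof.
move=> s0 sL; have /andP[ta0 ta1] := tau_rng sL.
apply/le_anti/andP; split; rewrite leNgt; apply/negP => H.
-
  have tpos : 0 < tau s.
    rewrite lt_neqAle ta0 andbT; apply/negP => /eqP e.
    by move: H; rewrite -e ell0 ltNge s0.
  have e0 : 0 < ell (tau s) - s by lra.
  have [t1 /andP[t10 t1t] Ht] := left_cont tpos ta1 e0.
  have := tau_ell_le (t := t1) t10 (le_trans (ltW t1t) ta1).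
  have := lr_add dm HL (lexx 0) t10 (ltW t1t) ta1; rewrite -/(ell _) -/(ell _).
  move=> hadd hle; have : tau s <= t1 by apply: hle; lra.
  by rewrite leNgt t1t.
-
  have t1 : tau s < 1.
    rewrite lt_neqAle ta1 andbT; apply/negP => /eqP e.
    by move: H; rewrite e ell1 ltNge sL.
  have e0 : 0 < s - ell (tau s) by lra.
  have [u /andP[tu u1] Hu] := right_cont ta0 t1 e0.
  have [y Sy yu] := inf_lt (S_ne sL) tu.
  have [/andP[y0 y1] _] := Sy.
  have ty : tau s <= y by apply: ge_inf => //; exact: S_lb.
  have := (S_iff s y0 y1).1 Sy.
  have := lr_add dm HL (lexx 0) ta0 ty y1.
  have := lr_add dm HL ta0 ty (ltW yu) u1.
  have := lr_ge0 dm HL (le_trans ta0 ty) (ltW yu) u1.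
  move: H Hu; rewrite /ell; lra.
Qed.

Lemma tau_mono s s' : s <= s' -> s' <= L -> tau s <= tau s'.
Proof.
move=> ss sL; apply: lb_le_inf; first exact: S_ne.
move=> t St; have [/andP[t0 t1] _] := St.
apply: tau_ell_le => //; have := (S_iff s' t0 t1).1 St; lra.
Qed.

Lemma arc_tau s : arclen d g s = g (tau s).
Proof. by []. Qed.

Lemma arc_ell t : 0 <= t -> t <= 1 -> arclen d g (ell t) = g t.
Proof.
move=> t0 t1; rewrite arc_tau; apply: (@deq0 _ _ _ d dm).
have /andP[e0 eL] := ell_rng t0 t1.
have /andP[ta0 ta1] := tau_rng eL.
have tt : tau (ell t) <= t by apply: tau_ell_le.
have := lr_d dm HL ta0 tt t1.
have := lr_add dm HL (lexx 0) ta0 tt t1.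
have := ell_tau e0 eL; rewrite /ell => h1 h2 h3.
apply/le_anti; rewrite dge0 // andbT; lra.
Qed.

Lemma arc_lip s s' : 0 <= s -> s <= s' -> s' <= L ->
  d (arclen d g s) (arclen d g s') <= s' - s.
Proof.
move=> s0 ss sL; rewrite !arc_tau.
have sL' := le_trans ss sL.
have /andP[ta0 ta1] := tau_rng sL'.
have /andP[tb0 tb1] := tau_rng sL.
have tt := tau_mono ss sL.
have := lr_d dm HL ta0 tt tb1.
have := lr_add dm HL (lexx 0) ta0 tt tb1.
have := ell_tau s0 sL'; have := ell_tau (le_trans s0 ss) sL.
rewrite /ell; lra.
Qed.

End Cont.

Section Rep.
Context {R : realType} {disp : measure_display} {X : measurableType disp}.
Variable d : X -> X -> R.
Hypothesis dm : is_metric d.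
Variables (g : R -> X) (L : R).
Hypothesis HL : clength d g = L%:E.
Hypothesis gc : curve_cont d g.
Hypothesis Lpos : 0 < L.

Definition hrep (t : R) := arclen d g (L * t).

Lemma h_lip_pt s t : 0 <= s -> s <= t -> t <= 1 -> d (hrep s) (hrep t) <= L * (t - s).
Proof.
move=> s0 st t1; rewrite /hrep mulrBr.
apply: (arc_lip dm HL gc).
- by rewrite mulr_ge0 // ltW.
- by rewrite ler_pM2l.
- by rewrite -{2}(mulr1 L) ler_pM2l.
Qed.

Lemma h_lip : curve_lip d hrep.
Proof.
exists L => s t /andP[s0 s1] /andP[t0 t1].
case: (leP s t) => st.
  rewrite distrC ger0_norm ?subr_ge0 //; exact: (h_lip_pt s0 st t1).
rewrite (dsym dm) ger0_norm; last by rewrite subr_ge0 ltW.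
exact: (h_lip_pt t0 (ltW st) s1).
Qed.

Lemma h_0 : hrep 0 = g 0.
Proof. by rewrite /hrep mulr0 -{1}(ell0 dm HL) (arc_ell dm HL gc). Qed.

Lemma h_1 : hrep 1 = g 1.
Proof. by rewrite /hrep mulr1 -(ell1 HL) (arc_ell dm HL gc). Qed.

Lemma h_psum_le b : forall n a t, ispart a b n t -> 0 <= a -> b <= 1 ->
  psum d hrep n t <= L * (b - a).
Proof.
elim=> [|n IH] a t hp a0 b1.
  by case: hp => h0 hn _; rewrite psum0 -h0 -hn subrr mulr0.
have hp' := ispartS hp.
have [h0 hn hm] := hp.
have /andP[at1 t1b] := ispart_rng hp (isT : (1 <= n.+1)%N).
rewrite psumS h0.
have := IH _ _ hp' (le_trans a0 at1) b1.
have := h_lip_pt a0 at1 (le_trans t1b b1).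
rewrite !mulrBr; lra.
Qed.

Lemma h_len : clength d hrep = L%:E.
Proof.
have up : (clength d hrep <= L%:E)%E.
  apply: len_le => n t hp; rewrite lee_fin.
  by have := h_psum_le hp (lexx 0) (lexx 1); rewrite subr0 mulr1.
have lo : ((d (hrep 0) (hrep 1))%:E <= clength d hrep)%E by apply: len_d.
have fin : clength d hrep = (fine (clength d hrep))%:E.
  by move: up lo; case: (clength d hrep).
rewrite fin; congr (_%:E); apply/le_anti/andP; split.
  by rewrite -lee_fin -fin.
apply/ler_addgt0Pr => e e0.
have [n [t [hp H]]] := lr_approx dm HL (lexx 0) ler01 (lexx 1) e0.
pose t' := fun i => ell d g (t i) / L.
have hp' : ispart 0 1 n t'.
  have [h0 hn hm] := hp; split.
  - by rewrite /t' h0 (ell0 dm HL) mul0r.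
  - by rewrite /t' hn (ell1 HL) divff // gt_eqF.
  - move=> i hi; rewrite /t'; apply: ler_wpM2r; first by rewrite invr_ge0 ltW.
    have /andP[ti0 ti1] := ispart_rng hp (ltnW hi).
    have /andP[tj0 tj1] := ispart_rng hp hi.
    by apply: (ell_mono dm HL) => //; apply: hm.
have eqs : psum d hrep n t' = psum d g n t.
  apply: eq_bigr => i _; rewrite /hrep /t'.
  have /andP[ti0 ti1] := ispart_rng hp (ltnW (ltn_ord i)).
  have /andP[tj0 tj1] := ispart_rng hp (ltn_ord i).
  rewrite [L * (_ / L)]mulrC divfK ?gt_eqF // [L * (_ / L)]mulrC divfK ?gt_eqF //.
  by rewrite !(arc_ell dm HL gc).
have := len_ub d hrep hp'; rewrite -/(clength d hrep) fin lee_fin eqs.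
move: H; rewrite (_ : lr d g 0 1 = L); first lra.
exact: (ell1 HL).
Qed.

Lemma h_lr t : 0 <= t -> t <= 1 -> lengthOn d hrep 0 t = (L * t)%:E.
Proof.
move=> t0 t1; rewrite (len_fin dm h_len) //; congr (_%:E).
have e1 : lr d hrep 0 1 = L by change (fine (clength d hrep) = L); rewrite h_len.
have := lr_add dm h_len (lexx 0) t0 t1 (lexx 1).
have := lr_le dm h_len (lexx 0) t0 t1 (fun n u hp => h_psum_le hp (lexx 0) t1).
have := lr_le dm h_len t0 t1 (lexx 1) (fun n u hp => h_psum_le hp t0 (lexx 1)).
rewrite e1 !mulrBr; lra.
Qed.

Lemma h_arc s : 0 <= s -> s <= L -> arclen d hrep s = arclen d g s.
Proof.
move=> s0 sL.
pose S' := [set t : R | 0 <= t <= 1 /\ (s%:E <= lengthOn d hrep 0 t)%E].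
have sL0 : 0 <= s / L by rewrite divr_ge0 // ltW.
have sL1 : s / L <= 1 by rewrite ler_pdivrMr // mul1r.
have inS : S' (s / L).
  split; first by rewrite sL0 sL1.
  by rewrite h_lr // lee_fin mulrC divfK // gt_eqF.
change (hrep (inf S') = arclen d g s).
have -> : inf S' = s / L.
  apply/le_anti/andP; split.
    by apply: ge_inf => //; exists 0 => t [/andP[]].
  apply: lb_le_inf; first by exists (s / L).
  move=> t [/andP[t0 t1]]; rewrite h_lr // lee_fin => H.
  by rewrite ler_pdivrMr // mulrC.
by rewrite /hrep mulrC divfK // gt_eqF.
Qed.

Lemma h_line rho : line_int d rho hrep = line_int d rho g.
Proof.
rewrite /line_int h_len HL; apply: eq_integral => s.
rewrite inE /= in_itv /= => /andP[s0 sL].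
by rewrite h_arc.
Qed.

End Rep.

Lemma reparam {R : realType} {disp : measure_display} {X : measurableType disp}
  (d : X -> X -> R) (g : R -> X) (L : R) :
  is_metric d -> curve_cont d g -> clength d g = L%:E ->
  exists h, [/\ curve_lip d h, h 0 = g 0, h 1 = g 1, clength d h = L%:E &
     forall rho, line_int d rho h = line_int d rho g].
Proof.
move=> dm gc HL.
have L0 := L_ge0 dm HL.
case: (ltP 0 L) => Lp.
  exists (hrep d g L); split.
  - exact: h_lip.
  - exact: h_0.
  - exact: h_1.
  - exact: h_len.
  - exact: h_line.
have LE : L = 0 by apply/le_anti; rewrite Lp L0.
exists g; split => //.
exists 0 => s t /andP[s0 s1] /andP[t0 t1]; rewrite mul0r.
have key : forall a b, 0 <= a -> a <= b -> b <= 1 -> d (g a) (g b) <= 0.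
  move=> a b a0 ab b1.
  have := lr_d dm HL a0 ab b1.
  have := lr_super dm HL (lexx 0) a0 ab b1.
  have := lr_super dm HL (lexx 0) (le_trans a0 ab) b1 (lexx 1).
  have := lr_ge0 dm HL (lexx 0) a0 (le_trans ab b1).
  have := lr_ge0 dm HL (le_trans a0 ab) b1 (lexx 1).
  have := ell1 HL; rewrite /ell LE; lra.
case: (leP s t) => st; first exact: key.
by rewrite (dsym dm); apply: key => //; apply: ltW.
Qed.

Section Main.
Context {R : realType} {disp : measure_display} {X : measurableType disp}.
Variable d : X -> X -> R.
Hypothesis dm : is_metric d.
Variable mu : {measure set X -> \bar R}.
Variable p : \bar R.

Lemma Mod_mono (G1 G0 : set (R -> X)) :
  (forall rho, admissible d G0 rho -> admissible d G1 rho) ->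
  (Mod d mu p G1 <= Mod d mu p G0)%E.
Proof.
move=> H; rewrite /Mod; case: p => [q| |];
  by apply: le_ereal_inf => _ [rho Hr <-]; exists rho => //; apply: H.
Qed.

Lemma Mod0 : (1 <= p)%E -> (0 < mu [set: X])%E -> Mod d mu p set0 = 0%E.
Proof.
move=> p1 muT.
have adm0 : admissible d set0 (cst 0%E) by split => //; exact: measurable_cst.
rewrite /Mod; move: p1; case: p => [q| |] //; rewrite ?lee_fin => q1.
  apply/le_anti/andP; split.
    apply: ge_ereal_inf; exists 0%E => //; exists (cst 0%E) => //.
    rewrite (_ : (fun x => poweR (cst 0%E x) q) = cst 0%E).
      by rewrite integral0.
    by apply: funext => x /=; rewrite powR0 // gt_eqF // (lt_le_trans ltr01 q1).
  apply: le_ereal_inf_tmp => _ [rho [_ H0 _] <-].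
  by apply: integral_ge0 => x _; exact: poweR_ge0.
apply/le_anti/andP; split.
  apply: ge_ereal_inf; exists 0%E => //; exists (cst 0%E) => //.
  exact: ess_sup_cst.
apply: le_ereal_inf_tmp => _ [rho [_ H0 _] <-].
by apply: ess_sup_gee => //; apply: nearW.
Qed.

Lemma dopen_oball x r : dopen d (oball d x r).
Proof.
move=> z hz; exists (r - d x z); first by rewrite subr_gt0.
move=> w hw; rewrite /oball /=.
have := dtri dm x z w; move: hw hz; rewrite /oball /=; lra.
Qed.

Lemma chain_tri (xs : nat -> X) n :
  d (xs 0%N) (xs n) <= \sum_(i < n) d (xs i) (xs i.+1).
Proof.
elim: n => [|n IH]; first by rewrite big_ord0 d0.
rewrite big_ord_recr /=.
have := dtri dm (xs 0%N) (xs n) (xs n.+1); lra.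
Qed.

Hypothesis p1 : (1 <= p)%E.
Hypothesis hb : borel_structure d.
Hypothesis hpos : balls_pos_finite d mu.
Hypothesis thick : thick_geodesic d mu p.

Lemma mball x r : measurable (oball d x r).
Proof. by rewrite hb; apply: sub_gen_smallest; exact: dopen_oball. Qed.

Lemma muball x r : 0 < r -> (0 < mu (oball d x r))%E.
Proof. by move=> r0; have /andP[] := hpos x r0. Qed.

Lemma muT (x : X) : (0 < mu [set: X])%E.
Proof.
apply: (lt_le_trans (muball x ltr01)).
by apply: le_measure => //; rewrite inE //; exact: mball.
Qed.

Lemma exist_short x y del (G0 : set (R -> X)) : 0 < del -> Mod d mu p G0 = 0%E ->
  exists h, GammaLip d (cball d x del) (cball d y del) h /\ ~ G0 h /\
     (clength d h <= (d x y + 3 * del)%:E)%E.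
Proof.
move=> del0 HG0; apply: contrapT => Hn.
pose D := d x y + 2 * del.
have D0 : 0 < D by rewrite /D; have := dge0 dm x y; lra.
pose C := 1 + del / D.
have C1 : 1 < C by rewrite /C ltrDl divr_gt0.
have := thick C1 (mball x del) (mball y del) (muball x del0) (muball y del0).
suff : (Mod d mu p (GammaC d (oball d x del) (oball d y del) C) <= 0)%E.
  by move=> /le_lt_trans H /H; rewrite ltxx.
rewrite -HG0; apply: Mod_mono => rho [rm r0 r1]; split => // g [gc [Eg [Fg Hl]]].
have lo : ((d (g 0) (g 1))%:E <= clength d g)%E by apply: len_d; exact: ler01.
have HL : clength d g = (fine (clength d g))%:E by move: lo Hl; case: (clength d g).
have [h [hl h0 h1 hlen hli]] := reparam dm gc HL.
rewrite -hli; apply: r1; apply: contrapT => nG0; apply: Hn; exists h; split.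
  split => //; split; rewrite /cball /=.
    by rewrite h0; exact: ltW.
  by rewrite h1; exact: ltW.
split => //.
rewrite hlen -HL; apply: (le_trans Hl); rewrite lee_fin.
have dg : d (g 0) (g 1) <= D.
  have := dtri dm (g 0) x (g 1); have := dtri dm x y (g 1).
  move: Eg Fg; rewrite /oball /= (dsym dm (g 0) x) /D; lra.
have : C * d (g 0) (g 1) <= C * D by rewrite ler_wpM2l // ltW // (lt_trans ltr01 C1).
have -> : C * D = D + del by rewrite /C mulrDl mul1r divfK // gt_eqF.
rewrite /D; lra.
Qed.

Definition fl x y del := ess_len d mu p (GammaLip d (cball d x del) (cball d y del)).

Lemma fl_lo x y del : 0 < del -> ((d x y - 2 * del)%:E <= fl x y del)%E.
Proof.
move=> del0; apply: le_ereal_sup_tmp.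
exists (ereal_inf [set clength d g | g in GammaLip d (cball d x del) (cball d y del) `\` set0]).
  by exists set0 => //; apply: Mod0 => //; exact: muT x.
apply: le_ereal_inf_tmp => _ [h [[hl [h0 h1]] _] <-].
apply: le_trans (len_d d h ler01); rewrite lee_fin.
have := dtri dm x (h 0) y; have := dtri dm (h 0) (h 1) y.
move: h0 h1; rewrite /cball /= (dsym dm (h 1) y); lra.
Qed.

Lemma fl_up x y del : 0 < del -> (fl x y del <= (d x y + 3 * del)%:E)%E.
Proof.
move=> del0; apply: ge_ereal_sup => _ [G0 HG0 <-].
have [h [Gh [nG0 hl]]] := exist_short x y del0 HG0.
by apply: ge_ereal_inf; exists (clength d h) => //; exists h.
Qed.

Lemma dp'_eq x y : dp' d mu p x y = (d x y)%:E.
Proof.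
rewrite /dp'; apply: cvg_lim => //.
apply: cvg_EFin.
  near=> del.
  have del0 : 0 < del by near: del; exact: nbhs_right_gt.
  have := fl_lo x y del0; have := fl_up x y del0; rewrite -/(fl x y del).
  by case: (fl x y del).
apply/cvgrPdist_lt => e e0.
near=> del.
have del0 : 0 < del by near: del; exact: nbhs_right_gt.
have dele : del < e / 3 by near: del; apply: nbhs_right_lt; lra.
have := fl_lo x y del0; have := fl_up x y del0; rewrite /comp -/(fl x y del).
case: (fl x y del) => //= r; rewrite !lee_fin => H1 H2.
rewrite ltr_norml; apply/andP; split; lra.
Unshelve. all: end_near.
Qed.

End Main.

Unset Implicit Arguments.

Theorem corollary5p10 (R : realType) (disp : measure_display)
  (X : measurableType disp) (d : X -> X -> R)
  (mu : {measure set X -> \bar R}) (p : \bar R) :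
  (1 <= p)%E ->
  is_metric d -> proper_space d -> borel_structure d ->
  balls_pos_finite d mu ->
  inf_doubling d mu ->
  thick_geodesic d mu p ->
  forall x y : X, (d x y)%:E = dp d mu p x y.
Proof.
move=> p1 dm _ hb hpos _ thick x y.
have E := dp'_eq dm p1 hb hpos thick.
rewrite /dp; apply/le_anti/andP; split.
  apply: le_ereal_inf_tmp => _ [n [xs [n0 hx hy ->]]].
  rewrite (eq_bigr (fun i : 'I_n => (d (xs i) (xs i.+1))%:E)); last by move=> i _; rewrite E.
  by rewrite sumEFin lee_fin -hx -hy; exact: (chain_tri dm).
apply: ge_ereal_inf; exists (d x y)%:E => //.
exists 1%N, (fun i => if i == 0%N then x else y); split => //.
by rewrite big_ord1 /= E.
Qed.
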